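(* Let $0<\mu<L_{\max}^{-1}$ with $L_{\max}=\max_i\|A_i\|_2^2$, and let $\{x^n\}$ be generated by GAITA (as in the context) from any $x^0\in\mathbf{R}^N$. For $n\in\mathbf{N}$ let $i=(n\bmod N)+1$ and $\Delta(x^n,x^{n+1})=T_\lambda(x^n)-T_\lambda(x^{n+1})$. Then $\Delta(x^n,x^{n+1})=0$ if and only if $x_i^{n+1}=x_i^n$.
   Context: Let $A\in\mathbf{R}^{m\times N}$ have columns $A_1,\dots,A_N$, $y\in\mathbf{R}^m$, $\lambda>0$, $q\in(0,1)$, and $T_\lambda(x)=\frac12\|Ax-y\|_2^2+\lambda\sum_{i=1}^N|x_i|^q$. For a step size $\mu>0$ set $\tau_{\mu,q}=\frac{2-q}{2-2q}(2\lambda\mu(1-q))^{\frac{1}{2-q}}$ and $\eta_{\mu,q}=(2\lambda\mu(1-q))^{\frac{1}{2-q}}$. For $z\in\mathbf{R}$ let $prox_{\mu,\lambda|\cdot|^q}(z)=\arg\min_{v\in\mathbf{R}}\{\frac{(z-v)^2}{2\mu}+\lambda|v|^q\}$ (a single point when $|z|\neq\tau_{\mu,q}$). Define $\mathcal{T}(z,w)$ as the unique element of $prox_{\mu,\lambda|\cdot|^q}(z)$ if $|z|\neq\tau_{\mu,q}$, and, if $|z|=\tau_{\mu,q}$, as $sgn(z)\eta_{\mu,q}$ when $w\neq0$ and $0$ when $w=0$ ($sgn(0)=0$). GAITA: given $x^0\in\mathbf{R}^N$, for $n=0,1,2,\dots$ let $i=(n\bmod N)+1$, $z_i^n=x_i^n-\mu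 A_i^T(Ax^n-y)$, $x_i^{n+1}=\mathcal{T}(z_i^n,x_i^n)$, $x_j^{n+1}=x_j^n$ for $j\neq i$. *)

(* Defs.v *)
From HB Require Import structures.
From mathcomp Require Import all_boot all_order all_algebra.
From mathcomp Require Import all_classical all_reals all_analysis.
Set Implicit Arguments. Unset Strict Implicit. Unset Printing Implicit Defensive.
Import Order.TTheory GRing.Theory Num.Theory.
Local Open Scope ring_scope.
Local Open Scope classical_set_scope.

Section GAITA.
Variables (R : realType) (m N : nat).
Variables (A : 'M[R]_(m, N)) (y : 'cV[R]_m) (lam q mu : R).

Definition resid (x : 'cV[R]_N) (j : 'I_m) : R := (A *m x) j 0 - y j 0.

Definition Tlam (x : 'cV[R]_N) : R :=
  2^-1 * (\sum_(j < m) resid x j ^+ 2) + lam * \sum_(i < N) (`|x i 0| `^ q).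

Definition colnorm2 (i : 'I_N) : R := \sum_(j < m) A j i ^+ 2.
Definition Lmax : R := \big[Num.max/0]_(i < N) colnorm2 i.

Definition tau : R :=
  (2 - q) / (2 - 2 * q) * ((2 * lam * mu * (1 - q)) `^ ((2 - q)^-1)).
Definition eta : R := (2 * lam * mu * (1 - q)) `^ ((2 - q)^-1).

Definition prox (z : R) : set R :=
  [set v | forall u : R,
     (z - v) ^+ 2 / (2 * mu) + lam * (`|v| `^ q)
       <= (z - u) ^+ 2 / (2 * mu) + lam * (`|u| `^ q)].

Definition Tmap (z w : R) : R :=
  if `|z| != tau then xget 0 (prox z)
  else if w != 0 then Num.sg z * eta else 0.

Definition zcoord (x : 'cV[R]_N) (i : 'I_N) : R :=
  x i 0 - mu * \sum_(j < m) A j i * resid x j.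

(* the sequence xs is generated by GAITA (index i = n mod N, 0-based) *)
Definition gaita_seq (xs : nat -> 'cV[R]_N) : Prop :=
  forall (n : nat) (i : 'I_N), (val i = n %% N)%N ->
    xs n.+1 i 0 = Tmap (zcoord (xs n) i) (xs n i 0) /\
    (forall j : 'I_N, j != i -> xs n.+1 j 0 = xs n j 0).

End GAITA.

(* Main.v *)
Require Import Defs.
From HB Require Import structures.
From mathcomp Require Import all_boot all_order all_algebra.
From mathcomp Require Import all_classical all_reals all_analysis.
From mathcomp Require Import ring lra.
Import Order.TTheory GRing.Theory Num.Theory.
Import numFieldNormedType.Exports.
Local Open Scope ring_scope.
Local Open Scope classical_set_scope.

Lemma cont_abspow (R : realType) (q : R) : 0 < q ->
  continuous (fun u : R => `|u| `^ q).
Proof.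
move=> q0 x.
have [->|x0] := eqVneq x 0.
  apply/cvgrPdist_lt => e e0.
  near=> t.
  rewrite /= normr0 powR0 ?gt_eqF// sub0r normrN ger0_norm ?powR_ge0//.
  have [->|t0] := eqVneq t 0; first by rewrite normr0 powR0 ?gt_eqF.
  have -> : e = (e `^ q^-1) `^ q by rewrite -powRrM mulVf ?gt_eqF// powRr1 ?ltW.
  apply: gt0_ltr_powR => //; rewrite ?nnegrE ?normr_ge0 ?powR_ge0//.
  near: t; apply/nbhs_normP; exists (e `^ q^-1); first by rewrite /= powR_gt0.
  by move=> t /=; rewrite sub0r normrN.
have nx : 0 < `|x| by rewrite normr_gt0.
pose g := fun u : R => expR (q * ln `|u|).
have gc : {for x, continuous g}.
  apply: (@continuous_comp _ _ _ (fun u : R => q * ln `|u|) (@expR R)); last first.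
    exact: continuous_expR.
  apply: continuousM; first exact: cst_continuous.
  have : {for x, continuous (@ln R \o (fun u : R => `|u|))}.
    apply: continuous_comp; first exact: norm_continuous.
    exact: continuous_ln.
  by [].
have eqfg : {near x, g =1 (fun u : R => `|u| `^ q)}.
  near=> u; rewrite /g /powR normr_eq0 ifF //.
  apply/negbTE; near: u; apply/nbhs_normP; exists `|x|; first by [].
  move=> u /=; apply: contraTN => /eqP ->; by rewrite subr0 ltxx.
apply: cvg_trans; first exact: (near_eq_cvg eqfg).
have -> : `|x| `^ q = g x by rewrite /g /powR normr_eq0 (negbTE x0).
exact: gc.
Unshelve. all: end_near. Qed.

Lemma prox_ex (R : realType) (lam q mu z : R) : 0 < lam -> 0 < q -> 0 < mu ->
  exists v, prox lam q mu z v.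
Proof.
move=> l0 q0 m0.
pose phi := fun u : R => (z - u) ^+ 2 / (2 * mu) + lam * (`|u| `^ q).
have cphi : continuous phi.
  move=> x; rewrite /phi.
  apply: (@continuousD _ _ _ (fun u : R => (z - u) ^+ 2 / (2 * mu))
     (fun u : R => lam * (`|u| `^ q))).
    apply: (@continuousM _ _ (fun u : R => (z - u) ^+ 2) (fun=> (2 * mu)^-1)); last exact: cst_continuous.
    rewrite /GRing.exp /=.
    apply: (@continuousM _ _ (fun u : R => (z - u)) (fun u : R => (z - u))).
      apply: (@continuousB _ _ _ (fun=> z) id); [exact: cst_continuous| exact: cvg_id].
    apply: (@continuousB _ _ _ (fun=> z) id); [exact: cst_continuous| exact: cvg_id].
  apply: (@continuousM _ _ (fun=> lam) (fun u : R => `|u| `^ q)); first exact: cst_continuous.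
  exact: cont_abspow.
have nz := normr_ge0 z.
have ab : - (2 * `|z|) <= 2 * `|z| by lra.
have [c _ cmin] := EVT_min ab (continuous_subspaceT cphi).
have in0 : (0:R) \in `[- (2 * `|z|), 2 * `|z|]%R by rewrite in_itv/=; apply/andP; split; lra.
exists c => u; rewrite -/(phi c) -/(phi u).
have [uin|uout] := boolP (u \in `[- (2 * `|z|), 2 * `|z|]%R); first exact: cmin.
apply: (le_trans (cmin _ in0)).
rewrite /phi normr0 powR0 ?gt_eqF// mulr0 addr0 subr0.
have hu : 2 * `|z| < `|u|.
  move: uout; rewrite in_itv/= negb_and -!ltNge => /orP[h|h].
    by rewrite [`|u|]ltr0_norm; lra.
  by rewrite [`|u|]gtr0_norm; lra.
have h1 : z ^+ 2 <= (z - u) ^+ 2.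
  have : `|z| <= Num.norm (`|z| - `|u|) by rewrite [Num.norm (_ - _)]ler0_norm; lra.
  move=> /le_trans/(_ (ler_dist_dist _ _)) h.
  rewrite -[z ^+ 2](real_normK (num_real z)) -[(z - u) ^+ 2](real_normK (num_real (z - u))).
  by rewrite ler_sqr ?nnegrE.
rewrite -[X in X <= _]addr0; apply: lerD; first by rewrite ler_pM2r // invr_gt0; lra.
by rewrite mulr_ge0 ?powR_ge0 // ltW.
Qed.

Lemma alg_ineq (R : realType) (q e a M T B : R) :
  q < 1 -> 0 <= M -> M * (1 - q) = e ^+ 2 -> T * (2 - 2 * q) = (2 - q) * e ->
  a * (2 - q - (1 - q) * a) <= B ->
  (T - e) ^+ 2 + M <= (T - a * e) ^+ 2 + M * B.
Proof.
move=> q1 M0 hM hT hB.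
have s0 : 0 < 1 - q by lra.
suff : 0 <= (1 - q) * ((T - a * e) ^+ 2 + M * B - ((T - e) ^+ 2 + M)).
  by rewrite pmulr_rge0 // subr_ge0.
have hT' : 2 * T * (1 - q) = (2 - q) * e by rewrite -hT; ring.
have hM' : (1 - q) * M = e ^+ 2 by rewrite -hM; ring.
have -> : (1 - q) * ((T - a * e) ^+ 2 + M * B - ((T - e) ^+ 2 + M)) =
  (1 - a) * e * (2 * T * (1 - q)) + (1 - q) * e ^+ 2 * (a ^+ 2 - 1)
  + ((1 - q) * M) * B - (1 - q) * M by ring.
rewrite hT' hM'.
have -> : (1 - a) * e * ((2 - q) * e) + (1 - q) * e ^+ 2 * (a ^+ 2 - 1) +
   e ^+ 2 * B - e ^+ 2 = e ^+ 2 * (B - a * (2 - q - (1 - q) * a)) by ring.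
by rewrite mulr_ge0 ?sqr_ge0 // subr_ge0.
Qed.
Lemma bern (R : realType) (q a : R) : 0 < q -> q < 1 -> 0 <= a ->
  a * (2 - q - (1 - q) * a) <= a `^ q.
Proof.
move=> q0 q1; rewrite le0r => /orP[/eqP->|a0].
  by rewrite mul0r powR_ge0.
rewrite -(mulr_powRB1 (ltW a0) q0) ler_pM2l //.
have hl : ln a <= a - 1.
  have := @le_ln1Dx R (a - 1); rewrite addrCA subrr addr0; apply; lra.
rewrite /powR gt_eqF //.
apply: le_trans (expR_ge1Dx _).
have : (q - 1) * (a - 1) <= (q - 1) * ln a by rewrite ler_wnM2l //; lra.
lra.
Qed.
Lemma eta_min (R : realType) (lam q mu z : R) :
  0 < lam -> 0 < q -> q < 1 -> 0 < mu -> `|z| = tau lam q mu ->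
  prox lam q mu z (Num.sg z * Defs.eta lam q mu).
Proof.
move=> l0 q0 q1 m0 hz.
set K := 2 * lam * mu * (1 - q).
have K0 : 0 < K by rewrite /K !mulr_gt0 //; lra.
set e := Defs.eta lam q mu.
have e0 : 0 < e by rewrite /e /Defs.eta powR_gt0.
have epow : e `^ (2 - q) = K.
  rewrite /e /Defs.eta -powRrM mulVf ?powRr1 ?ltW //; lra.
set E := e `^ q.
have EK : E * K = e ^+ 2.
  rewrite -epow /E -powRD; last by rewrite (gt_eqF e0) implybT.
  have -> : q + (2 - q) = 2%:R by rewrite addrCA subrr addr0.
  by rewrite powR_mulrn ?ltW.
set T := tau lam q mu.
have hz' : `|z| = T by [].
have hT : T * (2 - 2 * q) = (2 - q) * e.
  rewrite /T /tau -/(Defs.eta lam q mu) -/e; field; lra.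
set M := 2 * mu * (lam * E).
have hM : M * (1 - q) = e ^+ 2 by rewrite -EK /M /K; ring.
have M0 : 0 <= M by rewrite /M !mulr_ge0 ?powR_ge0 // ltW.
have z0 : z != 0.
  apply/negP => /eqP z0; move: hz; rewrite z0 normr0 /T /tau -/(Defs.eta lam q mu) -/e.
  move=> h; have : 0 < (2 - q) / (2 - 2 * q) * e.
    by rewrite mulr_gt0 // divr_gt0 //; lra.
  by rewrite -h ltxx.
move=> u.
have nv : `|Num.sg z * e| = e by rewrite normrM normr_sg z0 mul1r gtr0_norm.
have zv : (z - Num.sg z * e) ^+ 2 = (T - e) ^+ 2.
  rewrite {1}(numEsg z) -mulrBr exprMn sqr_sg z0 mul1r hz' //.
have zu : (T - `|u|) ^+ 2 <= (z - u) ^+ 2.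
  rewrite -hz' -[(_ - _) ^+ 2](real_normK (num_real _)).
  rewrite -[(z - u) ^+ 2](real_normK (num_real (z - u))).
  by rewrite ler_sqr ?nnegrE ?normr_ge0 ?ler_dist_dist.
set a := `|u| / e.
have ua : `|u| = a * e by rewrite /a mulfVK ?gt_eqF.
have a0 : 0 <= a by rewrite /a divr_ge0 ?normr_ge0 ?ltW.
have up : `|u| `^ q = E * a `^ q by rewrite ua [a * e]mulrC powRM // ltW.
have key : (T - e) ^+ 2 + M <= (z - u) ^+ 2 + M * a `^ q.
  apply: (le_trans (@alg_ineq _ q e a M T _ q1 M0 hM hT (@bern _ q a q0 q1 a0))).
  by rewrite lerD2r -ua.
rewrite nv zv up.
have -> : (T - e) ^+ 2 / (2 * mu) + lam * E = ((T - e) ^+ 2 + M) / (2 * mu).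
  by rewrite /M; field; lra.
have -> : (z - u) ^+ 2 / (2 * mu) + lam * (E * a `^ q) =
   ((z - u) ^+ 2 + M * a `^ q) / (2 * mu).
  by rewrite /M; field; lra.
by rewrite ler_pM2r // invr_gt0; lra.
Qed.
Lemma final_step (R : realType) (mu lam c w v z S pw pv : R) :
  0 < mu -> mu * c < 1 -> z = w - mu * S ->
  (z - v) ^+ 2 / (2 * mu) + lam * pv <= (z - w) ^+ 2 / (2 * mu) + lam * pw ->
  - (2^-1 * (2 * (v - w) * S + (v - w) ^+ 2 * c)) + lam * (pw - pv) = 0 ->
  v = w.
Proof.
move=> m0 mc hz hmin hD.
have hmin' : (z - v) ^+ 2 + 2 * mu * lam * pv <= (z - w) ^+ 2 + 2 * mu * lam * pw.
  have h2 : 0 < 2 * mu by lra.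
  have h2i : 0 < (2 * mu)^-1 by rewrite invr_gt0.
  rewrite -(ler_pM2r h2i).
  have -> : ((z - v) ^+ 2 + 2 * mu * lam * pv) / (2 * mu) = (z - v) ^+ 2 / (2 * mu) + lam * pv.
    by field; lra.
  have -> : ((z - w) ^+ 2 + 2 * mu * lam * pw) / (2 * mu) = (z - w) ^+ 2 / (2 * mu) + lam * pw.
    by field; lra.
  exact: hmin.
have hD' : - 2 * (v - w) * (mu * S) - mu * c * (v - w) ^+ 2 + 2 * mu * lam * (pw - pv) = 0.
  have -> : - 2 * (v - w) * (mu * S) - mu * c * (v - w) ^+ 2 + 2 * mu * lam * (pw - pv)
    = 2 * mu * (- (2^-1 * (2 * (v - w) * S + (v - w) ^+ 2 * c)) + lam * (pw - pv)).
    by field.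
  by rewrite hD mulr0.
have hS : mu * S = w - z by rewrite hz; ring.
rewrite hS in hD'.
have hq : (v - w) ^+ 2 * (1 - mu * c) <= 0 by nra.
have : (v - w) ^+ 2 <= 0.
  by rewrite -(ler_pM2r (_ : 0 < 1 - mu * c)) ?mul0r //; lra.
move=> h; apply/eqP; by rewrite -subr_eq0 -sqrf_eq0 eq_le h sqr_ge0.
Qed.
Theorem lemma2 (R : realType) (m N : nat) (A : 'M[R]_(m, N)) (y : 'cV[R]_m)
    (lam q mu : R) (xs : nat -> 'cV[R]_N) :
  0 < lam -> 0 < q -> q < 1 ->
  0 < mu -> mu * Lmax A < 1 ->
  gaita_seq A y lam q mu xs ->
  forall (n : nat) (i : 'I_N), (val i = n %% N)%N ->
    (Tlam A y lam q (xs n) - Tlam A y lam q (xs n.+1) = 0 <->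
     xs n.+1 i 0 = xs n i 0).
Proof.
move=> l0 q0 q1 m0 hL hg n i hi.
have [hxi hxj] := hg n i hi.
set x := xs n in hxi hxj *; set x' := xs n.+1 in hxi hxj *.
set w := x i 0; set v := x' i 0.
set z := zcoord A y mu x i.
split; last first.
  move=> hvw; have -> : x' = x; last by rewrite subrr.
  apply/matrixP => k l; rewrite (ord1 l).
  have [->|ki] := eqVneq k i; first exact: hvw.
  exact: hxj.
move=> hD.
have hres : forall j, resid A y x' j = resid A y x j + A j i * (v - w).
  move=> j; rewrite /resid !mxE (bigD1 i) //= [X in _ = X - _ + _](bigD1 i) //=.
  have -> : \sum_(k < N | k != i) A j k * x' k 0 = \sum_(k < N | k != i) A j k * x k 0.
    by apply: eq_bigr => k ki; rewrite hxj.
  rewrite /v /w; ring.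
have hpow : \sum_(k < N) `|x' k 0| `^ q = \sum_(k < N) `|x k 0| `^ q - `|w| `^ q + `|v| `^ q.
  rewrite (bigD1 i) //= [X in _ = X - _ + _](bigD1 i) //=.
  have -> : \sum_(k < N | k != i) `|x' k 0| `^ q = \sum_(k < N | k != i) `|x k 0| `^ q.
    by apply: eq_bigr => k ki; rewrite hxj.
  rewrite /v /w; ring.
set S := \sum_(j < m) A j i * resid A y x j.
set c := colnorm2 A i.
have hsq : \sum_(j < m) resid A y x' j ^+ 2 =
    \sum_(j < m) resid A y x j ^+ 2 + 2 * (v - w) * S + (v - w) ^+ 2 * c.
  under eq_bigr do rewrite hres.
  rewrite /S /c /colnorm2 !mulr_sumr -!big_split /=.
  by apply: eq_bigr => j _; ring.
have hD' : - (2^-1 * (2 * (v - w) * S + (v - w) ^+ 2 * c)) +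
    lam * (`|w| `^ q - `|v| `^ q) = 0.
  rewrite -hD /Tlam hsq hpow; ring.
have hc : mu * c < 1.
  apply: le_lt_trans hL; rewrite ler_pM2l //.
  by rewrite /Lmax (bigD1 i) //= le_max lexx.
have hz : z = w - mu * S by [].
have [hvw|hvw] := eqVneq v w; first by [].
have vmin : prox lam q mu z v.
  rewrite /v hxi -/z /Tmap.
  case: ifPn => [_|/negPn/eqP hzt].
    by apply: xgetPex; apply: prox_ex.
  case: ifPn => [_|/negPn/eqP w0]; first exact: eta_min.
  by exfalso; move: hvw; rewrite /v hxi /Tmap -/z hzt eqxx /= w0 eqxx /= /w w0 eqxx.
exact: (@final_step _ _ _ _ _ _ _ _ _ _ m0 hc hz (vmin w) hD').
Qed.
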